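(* Let $A=KQ/I$ be a finite-dimensional gentle algebra over the field $K$, let $B$ be a band for $A$ and let $q\ge 1$ be an integer. Put $\mathbf{d}=q\cdot\mathbf{dim}\,M(B,\lambda,1)$ (independent of $\lambda$). Then, in the Zariski topology of the module variety $\mathrm{mod}(A,\mathbf{d})$, $$\overline{\mathcal{O}_{B^{\times q}}}=\overline{\bigcup_{\lambda_1,\dots,\lambda_q\in K^*}\mathcal{O}_{M(B,\lambda_1,1)\oplus\cdots\oplus M(B,\lambda_q,1)}},$$ where $\mathcal{O}_M$ denotes the $\mathrm{GL}_{\mathbf{d}}$-orbit of (the points isomorphic to) a module $M$.
   Context: Letters are arrows $\alpha\in Q_1$ (direct letters, traversed from $s(\alpha)$ to $t(\alpha)$) and formal inverses $\alpha^{-1}$ (inverse letters, traversed from $t(\alpha)$ to $s(\alpha)$). A string is a walk $c_1\cdots c_m$ in $Q$ which is reduced (no letter followed by its own inverse) and avoids the relations of $I$ (and their inverses); there are trivial strings $e_v$ of length $0$; a string is identified with its inverse walk. A band is a closed walk $b_1\cdots b_m$ ($m\ge1$) all of whose powers are strings, considered up to cyclic rotation and inversion; it is minimal if it is not of the form $(B')^r$ with $r\ge 2$. For a band $B=b_1\cdots b_m$ with vertex positions $v_1,\dots,v_m$ ($b_t$ goes from $v_t$ to $v_{t+1}$, $v_{m+1}=v_1$), $\lambda\in K^*$ and $q\ge 1$, the band module $M(B,\lambda,q)$ places a copy of $K^q$ at each position $t$ (the space at a vertex $x$ of $Q$ is the direct sum of the copies at positions $t$ with $v_t=x$); each letter $b_t$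 gives the arrow it involves acting between the copies at positions $t$ and $t+1$ by the identity, except for one fixed letter, where it acts by the Jordan block $J(\lambda,q)$. $\mathrm{mod}(A,\mathbf{d})$ is the affine variety of representations of $(Q,I)$ with dimension vector $\mathbf{d}$, with $\mathrm{GL}_{\mathbf{d}}$ acting by base change. For a finite multi-set $\mathcal{D}$ consisting of strings $C_1,\dots,C_s$ and pairwise distinct bands $B_1,\dots,B_t$ with multiplicities $q_1,\dots,q_t$ (written $B_j^{\times q_j}$), its family $\mathcal{O}_{\mathcal{D}}\subseteq\mathrm{mod}(A,\mathbf{d})$ ($\mathbf{d}$ the total dimension vector) is the union of the orbits of all modules $\bigoplus_i M(C_i)\oplus\bigoplus_j\bigoplus_k M(B_j,\lambda_{jk},q_{jk})$ where $(q_{jk})_k$ is a partition of $q_j$ and $\lambda_{jk}\in K^*$; here $M(C)$ is the string module (a copy of $K$ at each vertex position of $C$, arrows acting by identities along the letters of $C$). Standing assumption: $K$ is an algebraically closed field. *)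

(* Defs.v *)
From mathcomp Require Import all_boot all_order all_algebra.
Set Implicit Arguments. Unset Strict Implicit. Unset Printing Implicit Defensive.
Import GRing.Theory.
Local Open Scope ring_scope.

Section Gentle.

(* A finite quiver with vertices 'I_n and arrows 'I_m; arrow a goes from
   src a to tgt a.  [rel a b] means that the length-two path "a then b"
   (tgt a = src b) is one of the generating relations of I. *)
Variables (n m : nat) (src tgt : 'I_m -> 'I_n) (rel : rel 'I_m).

Definition gentle : Prop :=
  [/\ (forall a b, rel a b -> tgt a = src b),
      (forall v, #|[set a | src a == v]| <= 2 /\ #|[set a | tgt a == v]| <= 2)%N,
      (forall b, #|[set a | (tgt a == src b) && ~~ rel a b]| <= 1 /\
                 #|[set c | (tgt b == src c) && ~~ rel b c]| <= 1)%N,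
      (forall b, #|[set a | (tgt a == src b) && rel a b]| <= 1 /\
                 #|[set c | (tgt b == src c) && rel b c]| <= 1)%N &
      (* finite dimension: the paths avoiding the relations (a basis of KQ/I)
         have bounded length *)
      exists N : nat, forall (a0 : 'I_m) (p : seq 'I_m),
        path (fun a b => (tgt a == src b) && ~~ rel a b) a0 p -> (size p < N)%N].

(* a letter: (a, true) = direct letter a, (a, false) = inverse letter a^-1 *)
Definition letter := ('I_m * bool)%type.
Definition lstart (l : letter) : 'I_n := if l.2 then src l.1 else tgt l.1.
Definition lend (l : letter) : 'I_n := if l.2 then tgt l.1 else src l.1.

(* l1 may be followed by l2 in a string *)
Definition ok2 (l1 l2 : letter) : bool :=
  [&& lend l1 == lstart l2,
      ~~ ((l1.1 == l2.1) && (l1.2 != l2.2)),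
      ~~ [&& l1.2, l2.2 & rel l1.1 l2.1] &
      ~~ [&& ~~ l1.2, ~~ l2.2 & rel l2.1 l1.1]].

Definition is_string (w : seq letter) : bool :=
  if w is l :: w' then path ok2 l w' else true.

Definition is_band (B : seq letter) : Prop :=
  [/\ (0 < size B)%N,
      (match B with [::] => true | l :: _ => lend (last l B) == lstart l end) &
      forall k, (0 < k)%N -> is_string (flatten (nseq k B))].

Variable K : fieldType.

(* row-vector convention: arrow a acts by v |-> v *m x a *)
Definition rep (d : 'I_n -> nat) := forall a : 'I_m, 'M[K]_(d (src a), d (tgt a)).

Definition modvar (d : 'I_n -> nat) (x : rep d) : Prop :=
  forall a b (e : tgt a = src b), rel a b ->
    x a *m castmx (esym (congr1 d e), erefl (d (tgt b))) (x b) = 0.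

Definition rep_iso (d e : 'I_n -> nat) (x : rep d) (y : rep e) : Prop :=
  exists (f : forall v, 'M[K]_(d v, e v)) (g : forall v, 'M[K]_(e v, d v)),
    [/\ forall v, f v *m g v = 1%:M,
        forall v, g v *m f v = 1%:M &
        forall a, x a *m f (tgt a) = f (src a) *m y a].

Inductive polyfun (d : 'I_n -> nat) : (rep d -> K) -> Prop :=
| pf_const c : polyfun (fun _ => c)
| pf_coord a i j : polyfun (fun x => x a i j)
| pf_add f g : polyfun f -> polyfun g -> polyfun (fun x => f x + g x)
| pf_mul f g : polyfun f -> polyfun g -> polyfun (fun x => f x * g x).

Definition zclosure (d : 'I_n -> nat) (S : rep d -> Prop) : rep d -> Prop :=
  fun x => forall f, polyfun f -> (forall y, S y -> f y = 0) -> f x = 0.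

Definition prep := {d : 'I_n -> nat & rep d}.
Definition dsum2 (P Q : prep) : prep :=
  existT (fun d => rep d) (fun v => (projT1 P v + projT1 Q v)%N)
    (fun a => block_mx (projT2 P a) 0 0 (projT2 Q a)).
Definition prep0 : prep := existT (fun d => rep d) (fun _ => 0%N) (fun a => 0).
Definition dsum (s : seq prep) : prep := foldr dsum2 prep0 s.

Section BandModule.
Variables (B : seq letter) (lam : K) (q : nat).

Definition bpos := 'I_(size B).
Definition blet (p : bpos) : letter := tnth (in_tuple B) p.
Definition bvert (p : bpos) : 'I_n := lstart (blet p).

(* basis of the space at vertex x: (position t with v_t = x, index < q) *)
Definition bidx (x : 'I_n) : finType := ({p : bpos | bvert p == x} * 'I_q)%type.
Definition bdim (x : 'I_n) : nat := #|{: bidx x}|.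

Definition jordan (i j : 'I_q) : K :=
  if i == j then lam else if (val j == (val i).+1)%N then 1 else 0.

(* the letter at position 0 is the fixed letter acting by J(lam, q) *)
Definition bcoef (p : bpos) (i j : 'I_q) : K :=
  if (val p == 0)%N then jordan i j else (i == j)%:R.

Definition bentry (a : 'I_m) (u : bidx (src a)) (w : bidx (tgt a)) : K :=
  \sum_(p : bpos)
    (if (blet p).1 == a then
       (if (blet p).2 then
          ((val u.1 == p) && (val w.1 == ordS p))%:R * bcoef p u.2 w.2
        else
          ((val u.1 == ordS p) && (val w.1 == p))%:R * bcoef p u.2 w.2)
     else 0).

Definition bandmod : prep :=
  existT (fun d => rep d) bdim
    (fun a => \matrix_(i, j) bentry (enum_val i) (enum_val j)).

End BandModule.

Definition band_family (B : seq letter) (q : nat) (d : 'I_n -> nat) : rep d -> Prop :=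
  fun x => modvar x /\
    exists ls : seq (K * nat),
      [/\ all (fun l => (l.1 != 0) && (0 < l.2)%N) ls,
          sumn (map snd ls) = q &
          rep_iso x (projT2 (dsum [seq bandmod B l.1 l.2 | l <- ls]))].

Definition band_union (B : seq letter) (q : nat) (d : 'I_n -> nat) : rep d -> Prop :=
  fun x => modvar x /\
    exists lams : seq K,
      [/\ size lams = q, all (fun l => l != 0) lams &
          rep_iso x (projT2 (dsum [seq bandmod B l 1 | l <- lams]))].

End Gentle.

(* Main.v *)
Require Import Defs.
From mathcomp Require Import all_boot all_order all_algebra.
From mathcomp Require Import ring.
Set Implicit Arguments. Unset Strict Implicit. Unset Printing Implicit Defensive.
Import GRing.Theory.
Local Open Scope ring_scope.

Lemma sum_delta (R : nzRingType) (T : finType) (a : T) (h : T -> R) :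
  \sum_(k : T) (a == k)%:R * h k = h a.
Proof.
rewrite (bigD1 a) //= eqxx mul1r big1 ?addr0 // => k /negbTE.
by rewrite eq_sym => ->; rewrite mul0r.
Qed.

Lemma sum_delta_r (R : nzRingType) (T : finType) (a : T) (h : T -> R) :
  \sum_(k : T) h k * (k == a)%:R = h a.
Proof.
rewrite (bigD1 a) //= eqxx mulr1 big1 ?addr0 // => k /negbTE ->.
by rewrite mulr0.
Qed.

Lemma mx_dim0 (K : fieldType) k l (A B : 'M[K]_(k, l)) : k = 0%N -> A = B.
Proof. by move=> k0; move: A B; rewrite k0 => A B; apply/matrixP => -[]. Qed.

Section Iso.
Variables (n m : nat) (src tgt : 'I_m -> 'I_n) (K : fieldType).
Notation rp d := (rep src tgt K d).

Lemma rep_iso_refl d (x : rp d) : rep_iso x x.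
Proof.
by exists (fun v => 1%:M), (fun v => 1%:M); split => // [v|v|a];
  rewrite ?mulmx1 ?mul1mx.
Qed.

Lemma rep_iso_eq d (x y : rp d) : (forall a, x a = y a) -> rep_iso x y.
Proof.
move=> E; exists (fun v => 1%:M), (fun v => 1%:M); split => // [v|v|a];
  by rewrite ?mulmx1 ?mul1mx ?E.
Qed.

Lemma rep_iso_sym d e (x : rp d) (y : rp e) : rep_iso x y -> rep_iso y x.
Proof.
case=> f [g [fg gf H]]; exists g, f; split => // a.
rewrite -[RHS]mulmx1 -(fg (tgt a)) mulmxA -(mulmxA (g (src a))) H.
by rewrite !mulmxA gf mul1mx.
Qed.

Lemma rep_iso_trans d e d' (x : rp d) (y : rp e) (z : rp d') :
  rep_iso x y -> rep_iso y z -> rep_iso x z.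
Proof.
case=> f1 [g1 [fg1 gf1 H1]] [f2 [g2 [fg2 gf2 H2]]].
exists (fun v => f1 v *m f2 v), (fun v => g2 v *m g1 v); split => [v|v|a].
- by rewrite mulmxA -(mulmxA (f1 v)) fg2 mulmx1 fg1.
- by rewrite mulmxA -(mulmxA (g2 v)) gf1 mulmx1 gf2.
- by rewrite mulmxA H1 -mulmxA H2 mulmxA.
Qed.

Lemma rep_iso_bij d e (x : rp d) (y : rp e)
  (s : forall v, 'I_(d v) -> 'I_(e v)) (t : forall v, 'I_(e v) -> 'I_(d v)) :
  (forall v, cancel (s v) (t v)) -> (forall v, cancel (t v) (s v)) ->
  (forall a i j, x a i j = y a (s _ i) (s _ j)) -> rep_iso x y.
Proof.
move=> st ts E.
exists (fun v => \matrix_(i, j) (s v i == j)%:R),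
       (fun v => \matrix_(i, j) (t v i == j)%:R); split => [v|v|a];
  apply/matrixP => i j; rewrite !mxE.
- rewrite (eq_bigr (fun k => (s v i == k)%:R * (t v k == j)%:R)) => [|k _];
    last by rewrite !mxE.
  by rewrite sum_delta st.
- rewrite (eq_bigr (fun k => (t v i == k)%:R * (s v k == j)%:R)) => [|k _];
    last by rewrite !mxE.
  by rewrite sum_delta ts.
- rewrite (eq_bigr (fun k => x a i k * ((k == t _ j))%:R)) => [|k _];
    last first.
    rewrite !mxE; congr (_ * _%:R).
    case: eqP => [<-|H]; first by rewrite st eqxx.
    by case: eqP => // H'; case: H; rewrite H' ts.
  rewrite sum_delta_r.
  rewrite (eq_bigr (fun k => (s _ i == k)%:R * y a k j)) => [|k _];
    last by rewrite !mxE.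
  by rewrite sum_delta E ts.
Qed.

Lemma rep_iso_dim0 d e (x : rp d) (y : rp e) :
  (forall v, d v = 0%N) -> (forall v, e v = 0%N) -> rep_iso x y.
Proof.
move=> d0 e0; exists (fun v => 0), (fun v => 0); split => [v|v|a];
  exact: mx_dim0.
Qed.


Lemma sum_enc (T : finType) (h : T -> K) :
  \sum_(k < #|{: T}|) h (enum_val k) = \sum_(t : T) h t.
Proof. by rewrite -(big_enum_val (A := T)). Qed.

Definition frep (T : 'I_n -> finType) := forall a, T (src a) -> T (tgt a) -> K.

Definition enc (T : 'I_n -> finType) (X : frep T) : prep src tgt K :=
  existT (fun d => rep src tgt K d) (fun v => #|{: T v}|)
    (fun a => \matrix_(i, j) X a (enum_val i) (enum_val j)).

Lemma enc_iso (T T' : 'I_n -> finType) (X : frep T) (Y : frep T')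
  (F : forall v, T v -> T' v -> K) (G : forall v, T' v -> T v -> K) :
  (forall v u w, \sum_t F v u t * G v t w = (u == w)%:R) ->
  (forall v u w, \sum_t G v u t * F v t w = (u == w)%:R) ->
  (forall a u w, \sum_t X a u t * F _ t w = \sum_t F _ u t * Y a t w) ->
  rep_iso (projT2 (enc X)) (projT2 (enc Y)).
Proof.
move=> FG GF H.
exists (fun v => \matrix_(i, j) F v (enum_val i) (enum_val j)),
       (fun v => \matrix_(i, j) G v (enum_val i) (enum_val j)).
split => [v|v|a]; apply/matrixP => i j; rewrite !mxE.
- under eq_bigr do rewrite !mxE.
  rewrite (sum_enc (fun t => F v (enum_val i) t * G v t (enum_val j))) FG.
  by rewrite (inj_eq enum_val_inj).
- under eq_bigr do rewrite !mxE.
  rewrite (sum_enc (fun t => G v (enum_val i) t * F v t (enum_val j))) GF.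
  by rewrite (inj_eq enum_val_inj).
- under eq_bigr do rewrite !mxE.
  under [RHS]eq_bigr do rewrite !mxE.
  rewrite (sum_enc (fun t => X a (enum_val i) t * F _ t (enum_val j))).
  by rewrite (sum_enc (fun t => F _ (enum_val i) t * Y a t (enum_val j))) H.
Qed.

Lemma enc_bij (T T' : 'I_n -> finType) (X : frep T) (Y : frep T')
  (f : forall v, T v -> T' v) (g : forall v, T' v -> T v) :
  (forall v, cancel (f v) (g v)) -> (forall v, cancel (g v) (f v)) ->
  (forall a u w, X a u w = Y a (f _ u) (f _ w)) ->
  rep_iso (projT2 (enc X)) (projT2 (enc Y)).
Proof.
move=> fg gf H.
apply: (@rep_iso_bij _ _ _ _
  (fun v i => enum_rank (f v (enum_val i))) (fun v k => enum_rank (g v (enum_val k)))).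
- by move=> v i /=; rewrite enum_rankK fg enum_valK.
- by move=> v i /=; rewrite enum_rankK gf enum_valK.
- by move=> a i j /=; rewrite !mxE !enum_rankK H.
Qed.

Lemma dsum2_iso (P P' Q Q' : prep src tgt K) :
  rep_iso (projT2 P) (projT2 P') -> rep_iso (projT2 Q) (projT2 Q') ->
  rep_iso (projT2 (dsum2 P Q)) (projT2 (dsum2 P' Q')).
Proof.
case=> f1 [g1 [fg1 gf1 H1]] [f2 [g2 [fg2 gf2 H2]]].
exists (fun v => block_mx (f1 v) 0 0 (f2 v)), (fun v => block_mx (g1 v) 0 0 (g2 v)).
split => [v|v|a] /=; rewrite mulmx_block ?mulmx0 ?mul0mx ?addr0 ?add0r.
- by rewrite fg1 fg2 -scalar_mx_block.
- by rewrite gf1 gf2 -scalar_mx_block.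
- by rewrite mulmx_block !mulmx0 !mul0mx !addr0 !add0r H1 H2.
Qed.

Lemma split_lshift m1 n1 (j : 'I_m1) : split (lshift n1 j) = inl j.
Proof. exact: (unsplitK (inl _ j)). Qed.
Lemma split_rshift m1 n1 (j : 'I_n1) : split (rshift m1 j) = inr j.
Proof. exact: (unsplitK (inr _ j)). Qed.

Definition sumT (T1 T2 : 'I_n -> finType) : 'I_n -> finType :=
  fun v => (T1 v + T2 v)%type.

Definition sumX T1 T2 (X1 : frep T1) (X2 : frep T2) : frep (sumT T1 T2) :=
  fun a u w => match u, w with
               | inl u1, inl w1 => X1 a u1 w1
               | inr u2, inr w2 => X2 a u2 w2
               | _, _ => 0 end.

Lemma dsum2_enc T1 T2 (X1 : frep T1) (X2 : frep T2) :
  rep_iso (projT2 (dsum2 (enc X1) (enc X2))) (projT2 (enc (sumX X1 X2))).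
Proof.
pose s v (i : 'I_(#|{: T1 v}| + #|{: T2 v}|)) : 'I_#|{: sumT T1 T2 v}| :=
  match split i with
  | inl i1 => enum_rank (inl (enum_val i1) : sumT T1 T2 v)
  | inr i2 => enum_rank (inr (enum_val i2) : sumT T1 T2 v) end.
pose t v (k : 'I_#|{: sumT T1 T2 v}|) : 'I_(#|{: T1 v}| + #|{: T2 v}|) :=
  match enum_val k with
  | inl u => lshift _ (enum_rank u)
  | inr u => rshift _ (enum_rank u) end.
apply: (@rep_iso_bij _ _ _ _ s t).
- move=> v i; rewrite /s /t; case: splitP => j Hj; rewrite enum_rankK enum_valK;
  by apply/val_inj; rewrite /= Hj.
- move=> v k; rewrite /s /t; case E: (enum_val k) => [u|u].
    by rewrite split_lshift enum_rankK -E enum_valK.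
  by rewrite split_rshift enum_rankK -E enum_valK.
- move=> a i j /=; rewrite /s.
  case: splitP => i1 Hi; case: splitP => j1 Hj.
  + have -> : i = lshift _ i1 by apply/val_inj.
    have -> : j = lshift _ j1 by apply/val_inj.
    by rewrite block_mxEul !mxE !enum_rankK /=.
  + have -> : i = lshift _ i1 by apply/val_inj.
    have -> : j = rshift _ j1 by apply/val_inj.
    by rewrite block_mxEur !mxE !enum_rankK /=.
  + have -> : i = rshift _ i1 by apply/val_inj.
    have -> : j = lshift _ j1 by apply/val_inj.
    by rewrite block_mxEdl !mxE !enum_rankK /=.
  + have -> : i = rshift _ i1 by apply/val_inj.
    have -> : j = rshift _ j1 by apply/val_inj.
    by rewrite block_mxEdr !mxE !enum_rankK /=.
Qed.


Lemma sum_prod (T1 T2 : finType) (h : T1 * T2 -> K) :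
  \sum_(t : T1 * T2) h t = \sum_(x : T1) \sum_(y : T2) h (x, y).
Proof. by rewrite pair_bigA; apply: eq_bigr => -[]. Qed.

Lemma eq_pairR (T1 T2 : eqType) (u w : T1 * T2) :
  (u.1 == w.1)%:R * (u.2 == w.2)%:R = (u == w)%:R :> K.
Proof.
case: u w => [u1 u2] [w1 w2] /=; rewrite xpair_eqE.
by case: (u1 == w1); rewrite ?mul1r ?mul0r.
Qed.

Lemma FG_diag (S : finType) Q Q' (P : 'M[K]_(Q, Q')) (R : 'M[K]_(Q', Q))
  (u w : S * 'I_Q) :
  \sum_(t : S * 'I_Q') ((u.1 == t.1)%:R * P u.2 t.2) * ((t.1 == w.1)%:R * R t.2 w.2)
  = (u.1 == w.1)%:R * (P *m R) u.2 w.2.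
Proof.
rewrite sum_prod.
transitivity (\sum_(x : S) (u.1 == x)%:R * ((x == w.1)%:R * (P *m R) u.2 w.2)).
  apply: eq_bigr => x _; rewrite mxE big_distrr big_distrr /=.
  by apply: eq_bigr => y _ /=; ring.
by rewrite sum_delta.
Qed.

Variable B : seq (letter m).

Definition bcoefM Q (Phi : 'M[K]_Q) (p : bpos B) : 'M[K]_Q :=
  if val p == 0%N then Phi else 1%:M.

Definition bind (a : 'I_m) (p s s' : bpos B) : K :=
  if (blet p).1 == a then
    (if (blet p).2 then ((s == p) && (s' == ordS p))%:R
     else ((s == ordS p) && (s' == p))%:R)
  else 0.

Definition bentryG Q (Phi : 'M[K]_Q) (a : 'I_m)
  (u : bidx src tgt B Q (src a)) (w : bidx src tgt B Q (tgt a)) : K :=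
  \sum_(p : bpos B) bind a p (val u.1) (val w.1) * bcoefM Phi p u.2 w.2.

Definition bgen Q (Phi : 'M[K]_Q) : prep src tgt K :=
  @enc (bidx src tgt B Q) (@bentryG Q Phi).

Definition jmx (lam : K) q : 'M[K]_q := \matrix_(i, j) jordan lam i j.

Lemma bandmod_gen lam q :
  rep_iso (projT2 (bandmod src tgt B lam q)) (projT2 (bgen (jmx lam q))).
Proof.
apply: rep_iso_eq => a; apply/matrixP => i j; rewrite !mxE.
apply: eq_bigr => p _; rewrite /bind /bcoefM /bcoef.
case: ((blet p).1 == a); last by rewrite mul0r.
by case: (blet p).2; case: (val p == 0%N); rewrite ?mxE.
Qed.

Lemma bgen_conj Q Q' (Phi : 'M[K]_Q) (Phi' : 'M[K]_Q') (P : 'M[K]_(Q, Q'))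
  (R : 'M[K]_(Q', Q)) :
  P *m R = 1%:M -> R *m P = 1%:M -> Phi *m P = P *m Phi' ->
  rep_iso (projT2 (bgen Phi)) (projT2 (bgen Phi')).
Proof.
move=> PR RP HP.
apply: (@enc_iso _ _ _ _
   (fun v u w => (u.1 == w.1)%:R * P u.2 w.2)
   (fun v u w => (u.1 == w.1)%:R * R u.2 w.2)).
- by move=> v u w; rewrite FG_diag PR mxE eq_pairR.
- by move=> v u w; rewrite FG_diag RP mxE eq_pairR.
move=> a u w.
have CP p : bcoefM Phi p *m P = P *m bcoefM Phi' p.
  by rewrite /bcoefM; case: ifP => _ //; rewrite mul1mx mulmx1.
transitivity (\sum_(p : bpos B) bind a p (val u.1) (val w.1) *
                 (bcoefM Phi p *m P) u.2 w.2).
  rewrite sum_prod.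
  transitivity (\sum_(p : bpos B) \sum_(x : {p : bpos B | bvert src tgt p == tgt a})
      \sum_(y : 'I_Q) bind a p (val u.1) (val x) * (x == w.1)%:R *
          (bcoefM Phi p u.2 y * P y w.2)).
    symmetry; rewrite exchange_big /=; apply: eq_bigr => x _.
    rewrite exchange_big /=; apply: eq_bigr => y _.
    rewrite /bentryG big_distrl /=; apply: eq_bigr => p _ /=; ring.
  apply: eq_bigr => p _.
  under eq_bigr do rewrite -big_distrr /=.
  under eq_bigr do rewrite mulrAC.
  by rewrite sum_delta_r mxE.
symmetry; rewrite sum_prod.
transitivity (\sum_(p : bpos B) \sum_(x : {p : bpos B | bvert src tgt p == src a})
    \sum_(y : 'I_Q') (u.1 == x)%:R * bind a p (val x) (val w.1) *
        (P u.2 y * bcoefM Phi' p y w.2)).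
  symmetry; rewrite exchange_big /=; apply: eq_bigr => x _.
  rewrite exchange_big /=; apply: eq_bigr => y _.
  rewrite /bentryG big_distrr /=; apply: eq_bigr => p _ /=; ring.
apply: eq_bigr => p _.
under eq_bigr do rewrite -big_distrr /=.
under eq_bigr do rewrite -mulrA.
by rewrite sum_delta CP mxE.
Qed.


Lemma bgen_split Q1 Q2 (Phi : 'M[K]_(Q1 + Q2)) (Phi1 : 'M[K]_Q1) (Phi2 : 'M[K]_Q2) :
  (forall i j, Phi (lshift Q2 i) (lshift Q2 j) = Phi1 i j) ->
  (forall i j, Phi (rshift Q1 i) (rshift Q1 j) = Phi2 i j) ->
  (forall i j, Phi (lshift Q2 i) (rshift Q1 j) = 0) ->
  (forall i j, Phi (rshift Q1 i) (lshift Q2 j) = 0) ->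
  rep_iso (projT2 (bgen Phi)) (projT2 (dsum2 (bgen Phi1) (bgen Phi2))).
Proof.
move=> Hll Hrr Hlr Hrl.
apply: rep_iso_trans; last exact: rep_iso_sym (dsum2_enc _ _).
pose f v (u : bidx src tgt B (Q1 + Q2) v) : sumT (bidx src tgt B Q1) (bidx src tgt B Q2) v :=
  match split u.2 with inl k => inl (u.1, k) | inr k => inr (u.1, k) end.
pose g v (u : sumT (bidx src tgt B Q1) (bidx src tgt B Q2) v) : bidx src tgt B (Q1 + Q2) v :=
  match u with inl u1 => (u1.1, lshift Q2 u1.2) | inr u2 => (u2.1, rshift Q1 u2.2) end.
apply: (@enc_bij _ _ _ _ f g).
- move=> v [s k]; rewrite /f /g /=; case: splitP => j Hj; congr (_, _);
  by apply/val_inj; rewrite /= Hj.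
- by move=> v [[s k]|[s k]]; rewrite /f /g /= ?split_lshift ?split_rshift.
move=> a [s k] [s' k']; rewrite /f /=.
case: splitP => j Hj; case: splitP => j' Hj'.
- have -> : k = lshift _ j by apply/val_inj.
  have -> : k' = lshift _ j' by apply/val_inj.
  apply: eq_bigr => p _ /=; rewrite /bcoefM; case: ifP => _; rewrite ?Hll //.
  by rewrite !mxE eq_shift.
- have -> : k = lshift _ j by apply/val_inj.
  have -> : k' = rshift _ j' by apply/val_inj.
  apply: big1 => p _ /=; rewrite /bcoefM; case: ifP => _; rewrite ?Hlr ?mulr0 //.
  by rewrite !mxE eq_shift mulr0.
- have -> : k = rshift _ j by apply/val_inj.
  have -> : k' = lshift _ j' by apply/val_inj.
  apply: big1 => p _ /=; rewrite /bcoefM; case: ifP => _; rewrite ?Hrl ?mulr0 //.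
  by rewrite !mxE eq_shift mulr0.
- have -> : k = rshift _ j by apply/val_inj.
  have -> : k' = rshift _ j' by apply/val_inj.
  apply: eq_bigr => p _ /=; rewrite /bcoefM; case: ifP => _; rewrite ?Hrr //.
  by rewrite !mxE eq_shift.
Qed.

Lemma bgen_dim0 (Phi : 'M[K]_0) (P : prep src tgt K) :
  (forall v, projT1 P v = 0%N) -> rep_iso (projT2 P) (projT2 (bgen Phi)).
Proof.
move=> P0; apply: rep_iso_dim0 => // v /=.
by rewrite card_prod card_ord muln0.
Qed.

Fixpoint blockJ (ls : seq (K * nat)) : 'M[K]_(sumn (map snd ls)) :=
  match ls return 'M[K]_(sumn (map snd ls)) with
  | [::] => 0
  | l :: ls' => block_mx (jmx l.1 l.2) 0 0 (blockJ ls')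
  end.

Lemma family_chain ls :
  rep_iso (projT2 (dsum [seq bandmod src tgt B l.1 l.2 | l <- ls]))
          (projT2 (bgen (blockJ ls))).
Proof.
elim: ls => [|l ls IH]; first by apply: (@bgen_dim0 (blockJ [::])). 
apply: rep_iso_trans; first exact: (dsum2_iso (bandmod_gen l.1 l.2) IH).
apply: rep_iso_sym; apply: bgen_split => i j;
  by rewrite ?block_mxEul ?block_mxEur ?block_mxEdl ?block_mxEdr ?mxE.
Qed.

Fixpoint diagL (mus : seq K) : 'M[K]_(size mus) :=
  match mus return 'M[K]_(size mus) with
  | [::] => 0
  | mu :: r => block_mx (jmx mu 1) 0 0 (diagL r)
  end.

Lemma union_chain mus :
  rep_iso (projT2 (bgen (diagL mus)))
          (projT2 (dsum [seq bandmod src tgt B mu 1 | mu <- mus])).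
Proof.
elim: mus => [|mu mus IH]; first by apply: rep_iso_sym; apply: (@bgen_dim0 (diagL [::])).
apply: rep_iso_trans (dsum2_iso (rep_iso_sym (bandmod_gen mu 1)) (IH)).
apply: (@bgen_split 1 (size mus) (diagL (mu :: mus))) => i j;
  by rewrite ?block_mxEul ?block_mxEur ?block_mxEdl ?block_mxEdr ?mxE.
Qed.

Lemma ord_split Q1 Q2 (i : 'I_(Q1 + Q2)) :
  (exists i1, i = lshift Q2 i1) \/ (exists i2, i = rshift Q1 i2).
Proof.
case: (splitP i) => j Hj; [left|right]; exists j; exact: val_inj.
Qed.

Lemma diagL_E mus (i j : 'I_(size mus)) :
  diagL mus i j = (i == j)%:R * mus`_i.
Proof.
elim: mus i j => [|mu mus IH] i j; first by case: i.
move: i j; change (forall i j : 'I_(1 + size mus),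
  (block_mx (jmx mu 1) 0 0 (diagL mus) : 'M_(1 + size mus)) i j
    = (i == j)%:R * (mu :: mus)`_i).
move=> i j.
have [[i1 ->]|[i1 ->]] := ord_split i; have [[j1 ->]|[j1 ->]] := ord_split j;
  rewrite ?block_mxEul ?block_mxEur ?block_mxEdl ?block_mxEdr ?mxE ?eq_shift
    ?mul0r //.
- by rewrite !ord1 /jordan /= mul1r.
Qed.


Variable r : rel 'I_m.

Lemma band_ok2 : is_band src tgt r B ->
  forall p : bpos B, ok2 src tgt r (blet p) (blet (ordS p)).
Proof.
case=> szB _ Hs p.
have H2 := Hs 2%N isT; rewrite /= cats0 in H2.
set x0 := blet p.
have Hp : forall i, (i.+1 < size (B ++ B))%N ->
    ok2 src tgt r (nth x0 (B ++ B) i) (nth x0 (B ++ B) i.+1).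
  move: H2; rewrite /is_string; case: (B ++ B) => [|l s] //.
  by move=> /(pathP x0) H i Hi; apply: H.
have lpB : (p < size B)%N := ltn_ord p.
have := Hp p; rewrite size_cat nth_cat lpB /blet !(tnth_nth x0) /=.
have Ex0 : nth x0 B p = x0 by rewrite {2}/x0 /blet (tnth_nth x0).
rewrite Ex0.
case: (ltngtP p.+1 (size B)) => [lt|gt|Heq].
- by rewrite nth_cat lt modn_small //; apply; rewrite ltn_addr.
- by move: gt; rewrite ltnS leqNgt lpB.
- rewrite nth_cat Heq ltnn subnn modnn; apply.
  by rewrite -addn1 leq_add2l -Heq.
Qed.

Lemma bind_rel (a b : 'I_m) (p p' s t w : bpos B) :
  is_band src tgt r B -> r a b -> bind a p s t * bind b p' t w = 0.
Proof.
move=> HB rab; rewrite /bind.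
case: ((blet p).1 =P a) => Ha; last by rewrite mul0r.
case: ((blet p').1 =P b) => Hb; last by rewrite mulr0.
have Hok := band_ok2 HB.
case Ed1: (blet p).2; case Ed2: (blet p').2.
- case: (t =P ordS p) => [Ht|_]; last by rewrite andbF mul0r.
  case: (t =P p') => [Ht'|_]; last by rewrite mulr0.
  have := Hok p; rewrite -Ht Ht' /ok2 Ed1 Ed2 Ha Hb rab /=.
  by rewrite !andbF.
- case: (t =P ordS p) => [Ht|_]; last by rewrite andbF mul0r.
  case: (t =P ordS p') => [Ht'|_]; last by rewrite mulr0.
  by move: Ed1; rewrite (ordS_inj (etrans (esym Ht) Ht')) Ed2.
- case: (t =P p) => [Ht|_]; last by rewrite andbF mul0r.
  case: (t =P p') => [Ht'|_]; last by rewrite mulr0.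
  by move: Ed1; rewrite -Ht Ht' Ed2.
- case: (t =P p) => [Ht|_]; last by rewrite andbF mul0r.
  case: (t =P ordS p') => [Ht'|_]; last by rewrite mulr0.
  have := Hok p'; rewrite -Ht' Ht /ok2 Ed1 Ed2 Ha Hb rab /=.
  by rewrite !andbF.
Qed.

Lemma enum_val_cast Q v w (e : v = w)
  (h : #|{: bidx src tgt B Q v}| = #|{: bidx src tgt B Q w}|)
  (k : 'I_#|{: bidx src tgt B Q v}|) :
  val (enum_val (cast_ord h k)).1 = val (enum_val k).1.
Proof. by case: w / e h => h; rewrite (eq_irrelevance h erefl) cast_ord_id. Qed.

Lemma modvar_bgen Q (Phi : 'M[K]_Q) : is_band src tgt r B ->
  modvar r (projT2 (bgen Phi)).
Proof.
move=> HB a b e rab; apply/matrixP => i j; rewrite !mxE.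
apply: big1 => k _; rewrite castmxE !mxE /bentryG.
rewrite (enum_val_cast e) big_distrl; apply: big1 => p _ /=.
rewrite big_distrr; apply: big1 => p' _ /=.
by rewrite mulrACA bind_rel // mul0r.
Qed.

Lemma castmx_mulr k k' l q (h : k = k') (A : 'M[K]_(k, l)) (C : 'M[K]_(l, q)) :
  castmx (h, erefl q) (A *m C) = castmx (h, erefl l) A *m C.
Proof. by case: k' / h; rewrite !castmx_id. Qed.

Lemma cast_mid (d e' : 'I_n -> nat) (v w : 'I_n) (h : v = w) k l
  (g : forall u, 'M[K]_(e' u, d u)) (f : forall u, 'M[K]_(d u, e' u))
  (Y : 'M[K]_(k, e' v)) (Z : 'M[K]_(e' w, l)) :
  (forall u, g u *m f u = 1%:M) ->
  Y *m g v *m castmx (esym (congr1 d h), erefl l) (f w *m Z) =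
  Y *m castmx (esym (congr1 e' h), erefl l) Z.
Proof.
move=> gf; case: w / h Z => Z; rewrite !castmx_id.
by rewrite mulmxA -(mulmxA Y) gf mulmx1.
Qed.

Lemma modvar_iso d e (x : rep src tgt K d) (y : rep src tgt K e) :
  rep_iso x y -> modvar r y -> modvar r x.
Proof.
case=> f [g [fg gf H]] My a b h rab.
have xE c : x c = f (src c) *m y c *m g (tgt c).
  by rewrite -H -mulmxA fg mulmx1.
rewrite (xE a) (xE b) -(mulmxA (f (src b))) (cast_mid _ _ _ gf) castmx_mulr.
by rewrite mulmxA -(mulmxA (f (src a))) My // mulmx0 mul0mx.
Qed.

End Iso.
Lemma char_poly_trmx (F : fieldType) Q (A : 'M[F]_Q) : char_poly A^T = char_poly A.
Proof.
rewrite /char_poly -det_tr; congr (\det _); apply/matrixP => i j.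
by rewrite !mxE eq_sym.
Qed.

Section Closed.
Variable K : closedFieldType.

Lemma fresh (s : seq K) : exists x, x \notin s.
Proof.
pose p := \prod_(a <- s) ('X - a%:P) * 'X - 1.
have Pn0 : \prod_(a <- s) ('X - a%:P) != 0 :> {poly K}.
  by rewrite -size_poly_eq0 size_prod_XsubC.
have szp : size p = (size s).+2.
  rewrite /p size_addl size_mulX ?size_prod_XsubC //.
  by rewrite size_opp size_poly1.
have /closed_rootP [x rx] : size p != 1%N by rewrite szp.
exists x; apply/negP => xs.
move: rx; rewrite /root /p !hornerE.
by move: (root_prod_XsubC s x); rewrite xs /root => /eqP ->; rewrite mul0r sub0r oppr_eq0 oner_eq0.
Qed.

Lemma fresh_list (bad : seq K) N :
  exists s : seq K, [/\ uniq s, size s = N & forall t, t \in s -> t \notin bad].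
Proof.
elim: N => [|N [s [us ss sb]]]; first by exists [::].
have [x xn] := fresh (bad ++ s).
move: xn; rewrite mem_cat negb_or => /andP[xb xs].
exists (x :: s); split => //=; first by rewrite xs us.
by rewrite ss.
by move=> t; rewrite inE => /predU1P [->|/sb].
Qed.

Lemma poly_cofinite (P : {poly K}) (bad : seq K) :
  (forall t, t \notin bad -> P.[t] = 0) -> P = 0.
Proof.
move=> H; apply/eqP; apply/negPn/negP => Pn0.
have [s [us ss sb]] := fresh_list bad (size P).
have Hall : all (root P) s by apply/allP => t /sb tb; rewrite /root H.
by have := max_poly_roots Pn0 Hall us; rewrite ss ltnn.
Qed.

Definition ispoly (g : K -> K) := exists P : {poly K}, forall t, g t = P.[t].

Lemma ispoly_const c : ispoly (fun _ => c).
Proof. by exists c%:P => t; rewrite hornerC. Qed.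
Lemma ispoly_id : ispoly (fun t => t).
Proof. by exists 'X => t; rewrite hornerX. Qed.
Lemma ispoly_add g h : ispoly g -> ispoly h -> ispoly (fun t => g t + h t).
Proof. by move=> [P HP] [R HR]; exists (P + R) => t; rewrite hornerD HP HR. Qed.
Lemma ispoly_mul g h : ispoly g -> ispoly h -> ispoly (fun t => g t * h t).
Proof. by move=> [P HP] [R HR]; exists (P * R) => t; rewrite hornerM HP HR. Qed.
Lemma ispoly_sum (I : finType) (h : I -> K -> K) :
  (forall i, ispoly (h i)) -> ispoly (fun t => \sum_i h i t).
Proof.
move=> H; have [P HP] := fin_all_exists H.
by exists (\sum_i P i) => t; rewrite horner_sum; apply: eq_bigr => i _.
Qed.

End Closed.

Lemma diag_trig (F : fieldType) Q (A : 'M[F]_Q) : (0 < Q)%N ->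
  (forall i j : 'I_Q, (j < i)%N -> A i j = 0) ->
  (forall i j : 'I_Q, A i i = A j j -> i = j) ->
  exists P : 'M[F]_Q, P \in unitmx /\ is_diag_mx (P *m A *m invmx P).
Proof.
case: Q A => // Q' A _ Htri Hinj.
have [P Pu HD] : exists2 P, P \in unitmx & similar_diag P A.
  apply/diagonalizableP; exists [seq A i i | i <- enum 'I_Q'.+1].
    by rewrite map_inj_uniq ?enum_uniq // => i j /Hinj.
  rewrite big_map big_enum /=.
  have -> : \prod_(i < Q'.+1) ('X - (A i i)%:P) = char_poly A.
    rewrite -char_poly_trmx char_poly_trig.
      by apply: eq_bigr => i _; rewrite mxE.
    by apply/is_trig_mxP => i j lij; rewrite mxE Htri.
  exact/mxminpoly_min/Cayley_Hamilton.
by exists P; split => //; rewrite -conjumx.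
Qed.
Section Main.
Variables (n m : nat) (src tgt : 'I_m -> 'I_n) (K : closedFieldType).
Variable B : seq (letter m).

Lemma polyfun_ext d (f : rep src tgt K d -> K) (x y : rep src tgt K d) :
  polyfun f -> (forall a i j, x a i j = y a i j) -> f x = f y.
Proof.
move=> pf E; elim: pf => //=.
- by move=> f1 g1 _ -> _ ->.
- by move=> f1 g1 _ -> _ ->.
Qed.

Lemma polyfun_curve d (f : rep src tgt K d -> K) (c : K -> rep src tgt K d) :
  polyfun f -> (forall a i j, ispoly (fun t => c t a i j)) ->
  ispoly (fun t => f (c t)).
Proof.
move=> pf Hc; elim: pf.
- by move=> c0; apply: ispoly_const.
- by move=> a i j; apply: Hc.
- by move=> f1 g1 _ H1 _ H2; apply: ispoly_add.
- by move=> f1 g1 _ H1 _ H2; apply: ispoly_mul.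
Qed.

Definition castI k l : 'M[K]_(k, l) := \matrix_(i, j) (val i == val j)%:R.

Lemma castI_mul k l : k = l -> castI k l *m castI l k = 1%:M.
Proof.
move=> h; case: l / h; apply/matrixP => i j; rewrite !mxE.
under eq_bigr do rewrite !mxE.
by rewrite (sum_delta i (fun k0 => (val k0 == val j)%:R)).
Qed.

Lemma castI_diag k l (h : k = l) (D : 'M[K]_k) (D' : 'M[K]_l) :
  (forall i j, D i j = (i == j)%:R * D i i) ->
  (forall i j, D' i j = (i == j)%:R * D' i i) ->
  (forall i j, val i = val j -> D i i = D' j j) ->
  D *m castI k l = castI k l *m D'.
Proof.
case: l / h D' => D' HD HD' E; apply/matrixP => i j; rewrite !mxE.
under eq_bigr do rewrite !mxE.
under [RHS]eq_bigr do rewrite !mxE.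
rewrite (sum_delta_r j (fun k0 => D i k0)) (sum_delta i (fun k0 => D' k0 j)).
by rewrite HD HD' (E i i).
Qed.

Lemma diag_to_diagL Q (D : 'M[K]_Q) : is_diag_mx D ->
  rep_iso (projT2 (bgen src tgt B D))
          (projT2 (bgen src tgt B (diagL [seq D i i | i <- enum 'I_Q]))).
Proof.
move=> /is_diag_mxP HD.
have h : Q = size [seq D i i | i <- enum 'I_Q] by rewrite size_map size_enum_ord.
apply: (bgen_conj src tgt B (P := castI _ _) (R := castI _ _)).
- exact: castI_mul.
- exact: castI_mul.
apply: castI_diag => //.
- move=> i j; case: (eqVneq i j) => [->|ij]; first by rewrite mul1r.
  by rewrite mul0r HD.
- by move=> i j; rewrite !diagL_E eqxx mul1r.
move=> i j eij; rewrite diagL_E eqxx mul1r (nth_map i).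
  suff -> : nth i (enum (ordinal Q)) j = i by [].
  apply/val_inj; rewrite /= nth_enum_ord -eij // ltn_ord.
  by [].
by rewrite size_enum_ord -eij ltn_ord.
Qed.


Lemma blockJ_props (ls : seq (K * nat)) :
  all (fun l => (l.1 != 0) && (0 < l.2)%N) ls ->
  (forall i j : 'I_(sumn (map snd ls)), (j < i)%N -> blockJ ls i j = 0) /\
  (forall i : 'I_(sumn (map snd ls)), blockJ ls i i != 0).
Proof.
elim: ls => [|l ls IH] /=; first by split => -[].
case/andP => /andP[l0 _] /IH [IH1 IH2].
change ((forall i j : 'I_(l.2 + sumn (map snd ls)), (j < i)%N ->
  (block_mx (jmx l.1 l.2) 0 0 (blockJ ls) : 'M_(l.2 + _)) i j = 0) /\
  (forall i : 'I_(l.2 + sumn (map snd ls)),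
  (block_mx (jmx l.1 l.2) 0 0 (blockJ ls) : 'M_(l.2 + _)) i i != 0)).
split.
  move=> i j; have [[i1 ->]|[i1 ->]] := ord_split i;
    have [[j1 ->]|[j1 ->]] := ord_split j;
    rewrite ?block_mxEul ?block_mxEur ?block_mxEdl ?block_mxEdr ?mxE //=.
  - move=> lt; rewrite /jordan; case: eqP => [e|_].
      by move: lt; rewrite e ltnn.
    case: eqP => // e; move: lt; rewrite e => /ltnW; rewrite ltnNge.
    by rewrite leqnn.
  - by rewrite ltn_add2l; apply: IH1.
move=> i; have [[i1 ->]|[i1 ->]] := ord_split i;
  by rewrite ?block_mxEul ?block_mxEdr ?mxE /jordan ?eqxx.
Qed.


Lemma ispoly_ext (g h : K -> K) : (forall t, g t = h t) -> ispoly h -> ispoly g.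
Proof. by move=> E [P HP]; exists P => t; rewrite E HP. Qed.

Lemma ispoly_mulmx3 k l p q (A : 'M[K]_(k, l)) (M : K -> 'M[K]_(l, p))
  (C : 'M[K]_(p, q)) i j :
  (forall i j, ispoly (fun t => M t i j)) -> ispoly (fun t => (A *m M t *m C) i j).
Proof.
move=> Hm.
apply: (@ispoly_ext _ (fun t => \sum_l0 (\sum_k0 A i k0 * M t k0 l0) * C l0 j)).
  by move=> t; rewrite !mxE; apply: eq_bigr => l0 _; rewrite !mxE.
apply: ispoly_sum => l0; apply: ispoly_mul; last exact: ispoly_const.
apply: ispoly_sum => k0; apply: ispoly_mul; [exact: ispoly_const | exact: Hm].
Qed.

Lemma key (r : rel 'I_m) d (f : rep src tgt K d -> K) (y : rep src tgt K d)
  (ls : seq (K * nat)) :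
  is_band src tgt r B -> polyfun f ->
  (forall z, @band_union n m src tgt r K B (sumn (map snd ls)) d z -> f z = 0) ->
  (0 < sumn (map snd ls))%N ->
  all (fun l => (l.1 != 0) && (0 < l.2)%N) ls ->
  rep_iso y (projT2 (dsum [seq bandmod src tgt B l.1 l.2 | l <- ls])) ->
  f y = 0.
Proof.
move=> HB pf Hun Qpos Hls isoy.
set Q := sumn (map snd ls) in Hun Qpos *.
have [Htri0 Hdiag0] := blockJ_props Hls.
set Phi0 := blockJ ls in Htri0 Hdiag0.
have [F [G [FG GF HFG]]] := rep_iso_trans isoy (family_chain src tgt B ls).
have [s [us ss _]] := fresh_list (K := K) [::] Q.
pose Phit t : 'M[K]_Q := \matrix_(i, j) (Phi0 i j + t * ((i == j)%:R * s`_i)).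
pose z t : rep src tgt K d :=
  fun a => F (src a) *m projT2 (bgen src tgt B (Phit t)) a *m G (tgt a).
have [P HP] : ispoly (fun t => f (z t)).
  apply: polyfun_curve => // a i j; rewrite /z.
  apply: ispoly_mulmx3 => k l.
  apply: (@ispoly_ext _ (fun t => bentryG (Phit t) (enum_val k) (enum_val l))).
    by move=> t; rewrite mxE.
  apply: ispoly_sum => p; apply: ispoly_mul; first exact: ispoly_const.
  rewrite /bcoefM; case: (val p == 0%N); last exact: ispoly_const.
  apply: (@ispoly_ext _ (fun t => Phi0 (enum_val k).2 (enum_val l).2 +
      t * (((enum_val k).2 == (enum_val l).2)%:R * s`_(enum_val k).2))).
    by move=> t; rewrite mxE.
  apply: ispoly_add; first exact: ispoly_const.
  by apply: ispoly_mul; [exact: ispoly_id | exact: ispoly_const].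
have z0 : f (z 0) = f y.
  apply: polyfun_ext => // a i j.
  rewrite /z.
  have -> : Phit 0 = Phi0 by apply/matrixP => i' j'; rewrite mxE mul0r addr0.
  by rewrite -HFG -mulmxA FG mulmx1.
pose bad := [seq (Phi0 j j - Phi0 i i) / (s`_i - s`_j) | i <- enum 'I_Q, j <- enum 'I_Q]
            ++ [seq - Phi0 i i / s`_i | i <- enum 'I_Q].
suff Hbad : forall t, t \notin bad -> f (z t) = 0.
  have P0 : P = 0 by apply: (poly_cofinite (bad := bad)) => t /Hbad; rewrite HP.
  by rewrite -z0 HP P0 horner0.
move=> t tb; apply: Hun.
have isoz : rep_iso (z t) (projT2 (bgen src tgt B (Phit t))).
  exists F, G; split => // a; rewrite /z -mulmxA GF mulmx1 //.
have sij (i j : 'I_Q) : i != j -> s`_i != s`_j.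
  by move=> ij; rewrite nth_uniq ?ss.
have Htri (i j : 'I_Q) : (j < i)%N -> Phit t i j = 0.
  by move=> ji; rewrite mxE Htri0 // -val_eqE /= gtn_eqF // mul0r mulr0 addr0.
have Hinj (i j : 'I_Q) : Phit t i i = Phit t j j -> i = j.
  rewrite !mxE !eqxx !mul1r => E; case: (eqVneq i j) => // ij.
  have sd : s`_i - s`_j != 0 by rewrite subr_eq0 sij.
  have tE : t = (Phi0 j j - Phi0 i i) / (s`_i - s`_j).
    apply: (mulIf sd); rewrite mulfVK //.
    have E' : Phi0 j j = Phi0 i i + t * s`_i - t * s`_j by rewrite E addrK.
    rewrite mulrBr E'; ring.
  move: tb; rewrite mem_cat negb_or => /andP[/negP tb _]; case: tb.
  by rewrite tE; apply: allpairs_f; rewrite mem_enum.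
have Hnz (i : 'I_Q) : Phit t i i != 0.
  rewrite mxE eqxx mul1r; apply/negP => /eqP E.
  have [s0|s0] := eqVneq s`_i 0.
    by move: E; rewrite s0 mulr0 addr0 => E; move: (Hdiag0 i); rewrite E eqxx.
  move: tb; rewrite mem_cat negb_or => /andP[_ /negP tb]; case: tb.
  apply/mapP; exists i; first by rewrite mem_enum.
  apply: (mulIf s0); rewrite divfK //.
  have E' : t * s`_i = - Phi0 i i by rewrite -[t * _](addKr (Phi0 i i)) E addr0.
  by rewrite E'.
have [Pm [Pu HD]] := diag_trig Qpos Htri Hinj.
set D := Pm *m Phit t *m invmx Pm in HD.
pose mus := [seq D i i | i <- enum 'I_Q].
split; first exact: modvar_iso isoz (modvar_bgen _ HB).
exists mus; split.
- by rewrite size_map size_enum_ord.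
- have detA : \det (Phit t) != 0.
    rewrite -det_tr det_trig; last by apply/is_trig_mxP => i j lij; rewrite mxE Htri.
    by apply/prodf_neq0 => i _; rewrite mxE.
  have detD : \det D = \prod_i D i i.
    apply: det_trig; apply/is_trig_mxP => i j lij.
    by move/is_diag_mxP: HD; apply; rewrite neq_ltn lij.
  have : \det D != 0.
    rewrite /D !det_mulmx det_inv mulrAC mulrV ?mul1r //.
  rewrite detD => /prodf_neq0 Hn.
  by apply/allP => x /mapP [i _ ->]; apply: Hn.
apply: rep_iso_trans isoz _.
apply: rep_iso_trans; last exact: union_chain.
apply: rep_iso_trans; last exact: diag_to_diagL.
apply: (bgen_conj src tgt B (P := invmx Pm) (R := Pm)).
- exact: mulVmx.
- exact: mulmxV.
by rewrite /D !mulmxA mulVmx // mul1mx.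
Qed.

End Main.

Lemma sumn_ones (K : fieldType) (s : seq K) :
  sumn (map snd [seq (l, 1%N) | l <- s]) = size s.
Proof. by elim: s => //= l s ->; rewrite add1n. Qed.

Theorem mainTheorem1 (K : closedFieldType) (n m : nat) (src tgt : 'I_m -> 'I_n)
  (rel : rel 'I_m) (B : seq (letter m)) (q : nat) :
  gentle src tgt rel -> is_band src tgt rel B -> (0 < q)%N ->
  let d := fun x => (q * projT1 (bandmod src tgt B (1 : K) 1) x)%N in
  forall x : rep src tgt K d,
    zclosure (@band_family _ _ src tgt rel K B q d) x <->
    zclosure (@band_union _ _ src tgt rel K B q d) x.
Proof.
move=> _ HB qpos d x; split => Hx f pf Hf.
- apply: Hx => // y [My [ls [Hls Hsz Hiso]]].
  apply: (key HB pf _ _ Hls Hiso); rewrite Hsz //.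
- apply: Hx => // y [My [lams [Hsz Hnz Hiso]]].
  apply: Hf; split => //; exists [seq (l, 1%N) | l <- lams]; split.
  + by rewrite all_map; apply: sub_all Hnz => l /= ->.
  + by rewrite sumn_ones.
  + by rewrite -map_comp; exact: Hiso.
Qed.
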